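(* Let $n \ge 1$ and let $X_1,\dots,X_n$ be observations from $\mathcal{N}(\mu,1)$ with sample mean $\bar x$, and let $z=\sqrt{n}\,\bar x$. For a prior variance $\tau^2>0$ define the Bayes factor \[ \mathrm{BF}_{01}(\bar x;\tau^2) = \sqrt{1+n\tau^2}\,\exp\left\{-\frac{z^2}{2}\cdot\frac{n\tau^2}{1+n\tau^2}\right\}. \] Suppose the result is two-sided statistically significant at level $\alpha = 0.05$, i.e. $|z| > 1.96$. Let $\tau^{*2} = k^*/n$, where $k^*$ is the unique $k>0$ with $(1+k)\ln(1+k) = z^2 k$. Then there exist prior variances $\tau_1^2 < \tau^{*2} < \tau_2^2$ such that $\mathrm{BF}_{01}(\bar x;\tau_1^2) < 1$ and $\mathrm{BF}_{01}(\bar x;\tau_2^2) > 1$.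
   Context: Model: testing $H_0:\mu=0$ versus $H_1:\mu\neq0$ in the normal model with known variance $\sigma^2=1$, with prior probability $1/2$ on $H_0$ and prior $\mu\mid H_1\sim\mathcal{N}(0,\tau^2)$. $\mathrm{BF}_{01}$ is the Bayes factor in favour of $H_0$; $\mathrm{BF}_{01}<1$ is interpreted as concluding in favour of $H_1$ and $\mathrm{BF}_{01}>1$ as concluding in favour of $H_0$. The quantity $\tau^{*2}$ is the critical prior variance (flip point divided by $n$). *)

(* Defs.v *)
From Stdlib Require Import Reals.
Open Scope R_scope.

Definition zstat (n : nat) (xbar : R) : R := sqrt (INR n) * xbar.

(* Bayes factor BF_01(xbar; tau2) for H0: mu = 0 vs H1: mu ~ N(0, tau2). *)
Definition BF01 (n : nat) (xbar tau2 : R) : R :=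
  let z := zstat n xbar in
  sqrt (1 + INR n * tau2) *
  exp (- (z ^ 2 / 2) * (INR n * tau2 / (1 + INR n * tau2))).

Definition flip_eq (z k : R) : Prop := (1 + k) * ln (1 + k) = z ^ 2 * k.

(* Main.v *)
Require Import Defs.
From Stdlib Require Import Reals Lra Lia.
Open Scope R_scope.

Lemma ln_gap a b : 0 < a -> a < b -> 1 - a / b < ln b - ln a.
Proof.
  intros Ha Hab.
  assert (Hw : 0 < ln b - ln a) by (pose proof (ln_increasing a b Ha Hab); lra).
  assert (E : exp (- (ln b - ln a)) = a / b).
  { replace (- (ln b - ln a)) with (ln a + - ln b) by ring.
    rewrite exp_plus, exp_Ropp, !exp_ln by lra. unfold Rdiv. ring. }
  pose proof (exp_ineq1 (- (ln b - ln a))) as H.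
  rewrite E in H. lra.
Qed.

Lemma ln_lt k : 0 < k -> ln (1 + k) < k.
Proof.
  intros Hk. pose proof (exp_ineq1 k) as H.
  assert (k <> 0) by lra.
  pose proof (ln_increasing (1 + k) (exp k) ltac:(lra) (H ltac:(lra))).
  rewrite ln_exp in H1. exact H1.
Qed.

Lemma sqrt_exp x : 0 < x -> sqrt x = exp (ln x / 2).
Proof.
  intros Hx.
  assert (E : x = Rsqr (exp (ln x / 2))).
  { unfold Rsqr. rewrite <- exp_plus. replace (ln x / 2 + ln x / 2) with (ln x) by field.
    rewrite exp_ln; auto. }
  rewrite E at 1. apply sqrt_Rsqr. left. apply exp_pos.
Qed.

Lemma BF_form n xbar k : (1 <= n)%nat -> 0 < k ->
  BF01 n xbar (k / INR n) =
  exp ((ln (1 + k) - zstat n xbar ^ 2 * k / (1 + k)) / 2).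
Proof.
  intros Hn Hk.
  assert (HN : 0 < INR n) by (apply lt_0_INR; lia).
  unfold BF01.
  replace (INR n * (k / INR n)) with k by (field; lra).
  rewrite sqrt_exp by lra. rewrite <- exp_plus. f_equal. field. lra.
Qed.

Theorem theorem2 (n : nat) (xbar kstar : R) :
  (1 <= n)%nat ->
  Rabs (zstat n xbar) > 196 / 100 ->
  0 < kstar ->
  flip_eq (zstat n xbar) kstar ->
  (forall k, 0 < k -> flip_eq (zstat n xbar) k -> k = kstar) ->
  exists tau1 tau2 : R,
    0 < tau1 /\ tau1 < kstar / INR n /\ kstar / INR n < tau2 /\
    BF01 n xbar tau1 < 1 /\ BF01 n xbar tau2 > 1.
Proof.
  intros Hn _ Hk Hf _.
  unfold flip_eq in Hf.
  set (c := zstat n xbar ^ 2) in *.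
  assert (HN : 0 < INR n) by (apply lt_0_INR; lia).
  exists ((kstar / 2) / INR n), ((2 * kstar) / INR n).
  assert (Hc : 0 <= c) by (unfold c; apply pow2_ge_0).
  split. { apply Rdiv_lt_0_compat; lra. }
  split. { apply Rmult_lt_compat_r. apply Rinv_0_lt_compat; lra. lra. }
  split. { apply Rmult_lt_compat_r. apply Rinv_0_lt_compat; lra. lra. }
  rewrite !BF_form by (auto; lra). fold c.
  split.
  - apply Rlt_le_trans with (exp 0); [apply exp_increasing | rewrite exp_0; lra].
    pose proof (ln_gap (1 + kstar/2) (1 + kstar) ltac:(lra) ltac:(lra)) as G.
    pose proof (ln_lt (kstar/2) ltac:(lra)) as L.
    set (L1 := ln (1 + kstar)) in *. set (L2 := ln (1 + kstar/2)) in *.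
    assert (G' : kstar / 2 < (1 + kstar) * (L1 - L2)).
    { replace (kstar/2) with ((1+kstar) * (1 - (1 + kstar/2)/(1+kstar))) by (field; lra).
      apply Rmult_lt_compat_l; lra. }
    assert (Hgoal : (1 + kstar/2) * L2 < c * (kstar/2)).
    { assert (E1 : c * (kstar/2) = (1+kstar)*L1/2) by lra.
      rewrite E1. nra. }
    assert (c * (kstar / 2) / (1 + kstar / 2) > L2).
    { apply Rmult_lt_reg_r with (1 + kstar/2). lra.
      replace (c * (kstar / 2) / (1 + kstar / 2) * (1 + kstar / 2)) with (c * (kstar/2)) by (field; lra).
      lra. }
    lra.
  - apply Rlt_gt. apply Rle_lt_trans with (exp 0); [rewrite exp_0; lra | apply exp_increasing].
    pose proof (ln_gap (1 + kstar) (1 + 2*kstar) ltac:(lra) ltac:(lra)) as G.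
    pose proof (ln_lt kstar ltac:(lra)) as L.
    set (L1 := ln (1 + kstar)) in *. set (L2 := ln (1 + 2*kstar)) in *.
    assert (G' : kstar < (1 + 2*kstar) * (L2 - L1)).
    { replace kstar with ((1+2*kstar) * (1 - (1 + kstar)/(1+2*kstar))) at 1 by (field; lra).
      apply Rmult_lt_compat_l; lra. }
    assert (Hgoal : c * (2*kstar) < (1 + 2*kstar) * L2).
    { assert (E1 : c * (2*kstar) = 2*((1+kstar)*L1)) by lra.
      rewrite E1. nra. }
    assert (c * (2*kstar) / (1 + 2*kstar) < L2).
    { apply Rmult_lt_reg_r with (1 + 2*kstar). lra.
      replace (c * (2*kstar) / (1 + 2*kstar) * (1 + 2*kstar)) with (c * (2*kstar)) by (field; lra).
      lra. }
    lra.
Qed.
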